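(* Let $d \ge 1$ and let $T^{(1)}$ be a one-layer Transformer as described in the context, with Lipschitz MLP $\psi:\mathbb{R}^d\to\mathbb{R}^d$ and attention scores satisfying the uniform bounded-difference condition with constant $\delta$. Fix $k \ge 0$, prefix vectors $\mathbf{v}_1,\dots,\mathbf{v}_k \in \mathbb{R}^d$ and a vector $\mathbf{v}\in\mathbb{R}^d$ (all taken from a finite vocabulary of token vectors). For $n \ge 1$ let $S_n = (\mathbf{v}_1,\dots,\mathbf{v}_k,\underbrace{\mathbf{v},\dots,\mathbf{v}}_{n \text{ times}})$, a sequence of length $n+k$, and let $S^* = (\mathbf{v})$ be the sequence of length one. Then $$\lim_{n\to\infty}\left\lVert T^{(1)}(S_n)_{n+k} - T^{(1)}(S^* )_1\right\rVert = 0.$$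
   Context: Model. Tokens are represented by vectors in $\mathbb{R}^d$ drawn from a finite vocabulary. A (decoder, causally masked) Transformer layer $T^{(\ell)}$ maps an input sequence $S=(\mathbf{v}_1,\dots,\mathbf{v}_m)$ to the output sequence $T^{(\ell)}(S)=(\mathbf{v}'_1,\dots,\mathbf{v}'_m)$ given by $$\mathbf{z}_i = \sum_{j\le i}\alpha_{i,j}\mathbf{v}_j + \mathbf{v}_i,\qquad \mathbf{v}'_i = \psi(\mathbf{z}_i)+\mathbf{z}_i,$$ where $\psi:\mathbb{R}^d\to\mathbb{R}^d$ is an MLP assumed Lipschitz continuous, and the attention coefficients are $\alpha_{i,j} = \exp(s_{i,j})/\sum_{j'\le i}\exp(s_{i,j'})$ for $j\le i$, with scores $s_{i,j}$ computed from queries and keys of tokens $i$ and $j$ (possibly with a bounded positional encoding, such as RoPE, acting only on queries and keys). Standing assumption: there is a constant $\delta$, independent of the sequence and its length, such that $|s_{i,j}-s_{i,j'}|\le\delta$ for all $i$ and all $j,j'\le i$; consequently $\alpha_{i,j}\le e^{\delta}/i$. $T^{(\ell)}(S)_i$ denotes the $i$-th element of the output sequence, and $\lVert\cdot\rVert$ is the Euclidean norm. *)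

(* Defs.v *)
From HB Require Import structures.
From mathcomp Require Import all_boot all_order all_algebra.
From mathcomp Require Import all_classical all_reals all_analysis.
Set Implicit Arguments. Unset Strict Implicit. Unset Printing Implicit Defensive.
Import Order.TTheory GRing.Theory Num.Theory.
Local Open Scope ring_scope.

Section Transformer.
Variables (R : realType) (d : nat).

Definition enorm (x : 'rV[R]_d) : R := Num.sqrt (\sum_(i < d) (x 0 i) ^+ 2).

Definition elipschitz (psi : 'rV[R]_d -> 'rV[R]_d) : Prop :=
  exists L : R, forall x y, enorm (psi x - psi y) <= L * enorm (x - y).

(* Token at 1-based position j of the sequence S. *)
Definition tok (S : seq 'rV[R]_d) (j : nat) : 'rV[R]_d := nth 0 S j.-1.

(* Attention scores: score i j q k is the score s_{i,j} of query position i
   (carrying token q) against key position j (carrying token k); positions are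
   1-based, so (bounded) positional encodings such as RoPE are covered. *)
Variable score : nat -> nat -> 'rV[R]_d -> 'rV[R]_d -> R.

Definition alpha (S : seq 'rV[R]_d) (i j : nat) : R :=
  expR (score i j (tok S i) (tok S j)) /
  \sum_(1 <= j' < i.+1) expR (score i j' (tok S i) (tok S j')).

Definition zvec (S : seq 'rV[R]_d) (i : nat) : 'rV[R]_d :=
  \sum_(1 <= j < i.+1) alpha S i j *: tok S j + tok S i.

Variable psi : 'rV[R]_d -> 'rV[R]_d.

Definition layer_out (S : seq 'rV[R]_d) (i : nat) : 'rV[R]_d :=
  psi (zvec S i) + zvec S i.

End Transformer.

(* Main.v *)
Require Import Defs.
From HB Require Import structures.
From mathcomp Require Import all_boot all_order all_algebra.
From mathcomp Require Import all_classical all_reals all_analysis.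
From mathcomp Require Import ring lra zify.
Import Order.TTheory GRing.Theory Num.Theory.
Local Open Scope ring_scope.

Section Aux.
Variables (R : realType) (d : nat).
Variable score : nat -> nat -> 'rV[R]_d -> 'rV[R]_d -> R.

Lemma Z_gt0 (S : seq 'rV[R]_d) i : (0 < i)%N ->
  0 < \sum_(1 <= j' < i.+1) expR (score i j' (tok S i) (tok S j')).
Proof.
move=> hi; rewrite big_nat_recl //= ltr_pwDl ?expR_gt0 //.
by apply: sumr_ge0 => j _; exact: expR_ge0.
Qed.

Lemma alpha_ge0 S i j : 0 <= alpha score S i j.
Proof.
rewrite /alpha divr_ge0 ?expR_ge0 //; apply: sumr_ge0 => j' _; exact: expR_ge0.
Qed.

Lemma alpha_sum S i : (0 < i)%N -> \sum_(1 <= j < i.+1) alpha score S i j = 1.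
Proof.
move=> hi; rewrite /alpha -mulr_suml; apply: divff; exact/lt0r_neq0/Z_gt0.
Qed.

Lemma alpha_le (V : seq 'rV[R]_d) (delta : R)
  (hdelta : forall (i j j' : nat) (q w w' : 'rV[R]_d),
      q \in V -> w \in V -> w' \in V ->
      (1 <= j <= i)%N -> (1 <= j' <= i)%N ->
      `|score i j q w - score i j' q w'| <= delta)
  S i j : (forall j, (1 <= j <= i)%N -> tok S j \in V) -> (1 <= j <= i)%N ->
  alpha score S i j <= expR delta / i%:R.
Proof.
move=> hV hj.
have hi : (0 < i)%N by case/andP: hj => h1 h2; exact: leq_trans h1 h2.
have hiV : tok S i \in V by apply: hV; rewrite hi leqnn.
set s := score i j (tok S i) (tok S j).
have hZ : (i%:R * expR (s - delta)) <= \sum_(1 <= j' < i.+1) expR (score i j' (tok S i) (tok S j')).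
  have -> : i%:R * expR (s - delta) = \sum_(1 <= j' < i.+1) expR (s - delta).
    by rewrite sumr_const_nat subSS subn0 mulr_natl.
  rewrite big_nat [X in _ <= X]big_nat; apply: ler_sum => j' hj'.
  rewrite ler_expR lerBlDl -lerBlDr.
  have := hdelta i j j' (tok S i) (tok S j) (tok S j') hiV (hV _ hj) (hV _ hj') hj hj'.
  by move/(le_trans (ler_norm _)).
have hip : 0 < (i%:R : R) by rewrite ltr0n.
rewrite /alpha ler_pdivrMr ?Z_gt0 //.
apply: (le_trans _ (ler_wpM2l _ hZ)); last by rewrite divr_ge0 ?expR_ge0 ?ltW.
have -> : expR delta / i%:R * (i%:R * expR (s - delta)) = expR s.
  by rewrite expRB -mulrA mulKf ?lt0r_neq0 // mulrC divfK // lt0r_neq0 // expR_gt0.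
by [].
Qed.
Lemma coord_le (x : 'rV[R]_d) i : `|x 0 i| <= enorm x.
Proof.
rewrite /enorm -sqrtr_sqr ler_sqrt; last by apply: sumr_ge0 => j _; exact: sqr_ge0.
rewrite (bigD1 i) //= lerDl; apply: sumr_ge0 => j _; exact: sqr_ge0.
Qed.

Lemma enorm_le_sum (x : 'rV[R]_d) : enorm x <= \sum_i `|x 0 i|.
Proof.
have h0 : 0 <= \sum_i `|x 0 i| by apply: sumr_ge0 => j _.
rewrite /enorm -(ger0_norm h0) -sqrtr_sqr ler_sqrt ?sqr_ge0 //.
pose K := fun (a b : R) => 0 <= a /\ a <= b ^+ 2 /\ 0 <= b.
have : K (\sum_i (x 0 i) ^+ 2) (\sum_i `|x 0 i|).
  apply: (big_ind2 K).
  - by rewrite /K expr0n /= lexx.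
  - move=> x1 x2 y1 y2 [h1 [h2 h3]] [h4 [h5 h6]]; rewrite /K; split; first exact: addr_ge0.
    split; last exact: addr_ge0. nra.
  - move=> i _; rewrite /K sqr_ge0 -real_normK ?num_real //.
by case=> _ [].
Qed.

End Aux.

Local Open Scope classical_set_scope.

Theorem lemma1 (R : realType) (d : nat) (hd : (1 <= d)%N)
  (V : seq 'rV[R]_d)
  (psi : 'rV[R]_d -> 'rV[R]_d) (hpsi : elipschitz psi)
  (score : nat -> nat -> 'rV[R]_d -> 'rV[R]_d -> R) (delta : R)
  (hdelta : forall (i j j' : nat) (q w w' : 'rV[R]_d),
      q \in V -> w \in V -> w' \in V ->
      (1 <= j <= i)%N -> (1 <= j' <= i)%N ->
      `|score i j q w - score i j' q w'| <= delta)
  (k : nat) (pre : seq 'rV[R]_d) (hk : size pre = k) (hpre : all (mem V) pre)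
  (v : 'rV[R]_d) (hv : v \in V) :
  (fun n : nat =>
     enorm (layer_out score psi (pre ++ nseq n.+1 v) (n.+1 + k)%N
            - layer_out score psi [:: v] 1%N)) @ \oo --> (0%R : R^o).
Proof.
case: hpsi => L hL.
pose g j := nth 0 (map (fun w => w - v) pre) j.-1.
pose c i := \sum_(1 <= j < k.+1) `|g j 0 i|.
pose C := (d%:R * `|L| + 1) * (expR delta * \sum_i c i).
have hg0 : forall j, (k < j)%N -> g j = 0.
  move=> j hj; rewrite /g nth_default // size_map hk; lia.
have hc0 : forall i, 0 <= c i by move=> i; apply: sumr_ge0.
have key : forall n, enorm (layer_out score psi (pre ++ nseq n.+1 v) (n.+1 + k)%N
            - layer_out score psi [:: v] 1%N) <= C * n.+1%:R^-1.
  move=> n.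
  set N := (n.+1 + k)%N.
  set S := pre ++ nseq n.+1 v.
  have hS : size S = N by rewrite size_cat size_nseq hk addnC.
  have hV : forall j, (1 <= j <= N)%N -> tok S j \in V.
    move=> j /andP[h1 h2]; rewrite /tok.
    have hj : (j.-1 < size S)%N by rewrite hS; lia.
    have := mem_nth 0 hj; rewrite mem_cat => /orP[h|h].
      exact: (allP hpre _ h).
    by move: h; rewrite mem_nseq => /andP[_ /eqP->].
  have hg : forall j, (1 <= j <= N)%N -> tok S j - v = g j.
    move=> j /andP[h1 h2]; rewrite /tok /g nth_cat; case: ltnP => hjk.
      by rewrite (nth_map 0).
    rewrite nth_nseq ifT; last by move: hjk h2; rewrite hk /N; lia.
    by rewrite subrr nth_default // size_map.
  have hN1 : (1 <= N)%N by rewrite /N; lia.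
  have hNv : tok S N = v.
    have := hg N; rewrite hg0; last by rewrite /N; lia.
    by move=> /(_ _)/eqP; rewrite subr_eq0 hN1 leqnn => /(_ isT)/eqP.
  have hz : zvec score S N - (v + v) = \sum_(1 <= j < N.+1) alpha score S N j *: g j.
    rewrite /zvec hNv opprD addrA addrK.
    rewrite -{1}(scale1r v) -(@alpha_sum _ _ score S N) // scaler_suml -sumrB.
    by apply: eq_big_nat => j hj; rewrite -scalerBr hg.
  have hZc : forall i, `|(zvec score S N - (v + v)) 0 i| <= expR delta / N%:R * c i.
    move=> i; rewrite hz summxE.
    apply: le_trans (ler_norm_sum _ _ _) _.
    rewrite /c mulr_sumr (@big_cat_nat _ _ _ k.+1) //=; last by rewrite /N; lia.
    rewrite [X in _ + X](_ : _ = 0) ?addr0; last first.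
      by rewrite big_nat big1 // => j /andP[hj _]; rewrite hg0 // !mxE mulr0 normr0.
    rewrite big_nat [X in _ <= X]big_nat; apply: ler_sum => j /andP[hj1 hj2].
    rewrite !mxE normrM ger0_norm ?alpha_ge0 //.
    apply: ler_wpM2r => //; apply: (@alpha_le _ _ score V delta hdelta) => //.
    by rewrite hj1 /N; lia.
  have hzs : zvec score [:: v] 1 = v + v.
    rewrite /zvec big_nat1 /alpha big_nat1 divff ?scale1r //.
    exact/lt0r_neq0/expR_gt0.
  rewrite /layer_out hzs -/N -/S.
  set Dz := zvec score S N - (v + v).
  set Dp := psi (zvec score S N) - psi (v + v).
  have -> : psi (zvec score S N) + zvec score S N - (psi (v + v) + (v + v)) = Dp + Dz.
    by rewrite /Dp /Dz opprD addrACA.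
  apply: le_trans (@enorm_le_sum _ _ _) _.
  have h1 : \sum_i `|(Dp + Dz) 0 i| <= d%:R * enorm Dp + \sum_i `|Dz 0 i|.
    apply: (@le_trans _ _ (\sum_i (enorm Dp + `|Dz 0 i|))).
      apply: ler_sum => i _; rewrite mxE; apply: (le_trans (ler_normD _ _)).
      by rewrite lerD2r coord_le.
    by rewrite big_split /= sumr_const card_ord mulr_natl.
  have hDp : enorm Dp <= `|L| * enorm Dz.
    apply: (le_trans (hL _ _)); apply: ler_wpM2r; [exact: sqrtr_ge0 | exact: ler_norm].
  have hDz := @enorm_le_sum _ _ Dz.
  set X := \sum_i `|Dz 0 i|.
  have hX0 : 0 <= X by apply: sumr_ge0.
  have hXY : X <= (expR delta * \sum_i c i) * n.+1%:R^-1.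
    apply: (@le_trans _ _ (\sum_i expR delta / N%:R * c i)).
      by apply: ler_sum => i _; exact: hZc.
    rewrite -mulr_sumr mulrAC; apply: ler_pM => //.
      by rewrite mulr_ge0 ?expR_ge0 // sumr_ge0.
    rewrite lef_pV2 ?posrE ?ltr0n // ler_nat /N; lia.
  have hP : 0 <= d%:R * `|L| by rewrite mulr_ge0.
  have hE : 0 <= enorm Dz by exact: sqrtr_ge0.
  rewrite /C -mulrA.
  move: h1 hDp hDz hXY hX0 hP hE.
  set P := d%:R * `|L|. set Y := (expR delta * \sum_i c i) * n.+1%:R^-1.
  set E1 := enorm Dp. set E2 := enorm Dz. set Q := \sum_i `|(Dp + Dz) 0 i|.
  move=> h1 hDp hDz hXY hX0 hP hE.
  have : d%:R * E1 <= P * E2.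
    by rewrite /P -mulrA; apply: ler_pM => //; exact: sqrtr_ge0.
  have h2 : 0 <= P * (X - E2) by rewrite mulr_ge0 // subr_ge0.
  have h3 : 0 <= P * (Y - X) by rewrite mulr_ge0 // subr_ge0.
  move=> h4.
  have h1' : Q <= d%:R * E1 + X by exact: h1.
  have hDz' : E2 <= X by exact: hDz.
  clear h1 hDz; nra.
have hC : 0 <= C.
  rewrite /C mulr_ge0 ?mulr_ge0 ?addr_ge0 ?expR_ge0 //; exact: sumr_ge0.
have hh : (fun n => C * harmonic n) @ \oo --> (0 : R^o).
  have := cvgMl_tmp (a := C) (@cvg_harmonic R); rewrite mulr0 => H; apply: H; exact: eventually_filter.
have hf : (fun _ : nat => (0 : R)) @ \oo --> (0 : R^o) by exact: (@cvg_cst R^o 0 nat \oo eventually_filter).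
have hnear : \forall n \near \oo, (fun _ : nat => (0 : R)) n <=
   enorm (layer_out score psi (pre ++ nseq n.+1 v) (n.+1 + k)%N
            - layer_out score psi [:: v] 1%N) <= C * harmonic n.
  by apply: nearW => n; rewrite key andbT; exact: sqrtr_ge0.
exact: (squeeze_cvgr hnear hf hh).
Qed.
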